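(* Let $R=k[x_1,\dots,x_n]$, $f_1,\dots,f_m\in R$, $I=\langle f_1,\dots,f_m\rangle$, with fixed term orders on $R$ and $R^m$. Let $G$ be a finite set of polynomials in $I$ with $\{f_1^{[\mathbf e_1]},\dots,f_m^{[\mathbf e_m]}\}\subset G$. If for every critical pair of elements of $G$ its S-polynomial has a standard representation w.r.t. $G$, then $G$ is a labeled Gröbner basis for $I$.
   Context: Let $\mathbf f=(f_1,\dots,f_m)$; a polynomial in $I$ is a pair $f^{[\mathbf u]}$ with $\mathbf u\in R^m$ and $f=\mathbf u\cdot\mathbf f$, with operations $f^{[\mathbf u]}+g^{[\mathbf v]}=(f+g)^{[\mathbf u+\mathbf v]}$, $ct(f^{[\mathbf u]})=(ctf)^{[ct\mathbf u]}$. $\mathbf e_i$ is the $i$-th unit vector. $\mathrm{lpp},\mathrm{lc}$ are leading power product and coefficient (both orders denoted $\prec$), with $\mathrm{lpp}(0)=0\prec$ all nonzero power products. A module monomial $x^\alpha\mathbf e_i$ divides $x^\beta\mathbf e_j$ iff $i=j$ and $x^\alpha\mid x^\beta$. Critical pair: for $g^{[\mathbf v]},h^{[\mathbf w]}$ with $g,h\ne0$, $t=\mathrm{lcm}(\mathrm{lpp}(g),\mathrm{lpp}(h))$, $t_g=t/\mathrm{lpp}(g)$, $t_h=t/\mathrm{lpp}(h)$; if $\mathrm{lpp}(t_g\mathbf v)\succeq\mathrm{lpp}(t_h\mathbf w)$ then $(t_g,g^{[\mathbf v]},t_h,h^{[\mathbf w]})$ is a critical pair, with S-polynomial $t_g(g^{[\mathbf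 v]})-c\,t_h(h^{[\mathbf w]})$, $c=\mathrm{lc}(g)/\mathrm{lc}(h)$. A polynomial $f^{[\mathbf u]}$ in $I$ has a standard representation w.r.t. $B$ if there are $p_i\in R$ and $g_i^{[\mathbf v_i]}\in B$ with $f=\sum_i p_ig_i$, $\mathrm{lpp}(f)\succeq\mathrm{lpp}(p_ig_i)$ and $\mathrm{lpp}(\mathbf u)\succeq\mathrm{lpp}(p_i\mathbf v_i)$ for all $i$. $G$ is a labeled Gröbner basis for $I$ if for every $f^{[\mathbf u]}$ in $I$ with $f\ne0$ there is $g^{[\mathbf v]}\in G$ with $\mathrm{lpp}(g)\mid\mathrm{lpp}(f)$ and $\mathrm{lpp}(t\mathbf v)\preceq\mathrm{lpp}(\mathbf u)$, $t=\mathrm{lpp}(f)/\mathrm{lpp}(g)$. *)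

(* Defs.v *)
From HB Require Import structures.
From mathcomp Require Import all_boot all_order all_algebra.
From mathcomp Require Export mpoly.
Set Implicit Arguments. Unset Strict Implicit. Unset Printing Implicit Defensive.
Import Order.TTheory GRing.Theory.
Local Open Scope ring_scope.

Definition is_total_order (T : eqType) (le : rel T) : Prop :=
  [/\ reflexive le, antisymmetric le, transitive le & total le].

Definition is_term_order (n : nat) (le : rel 'X_{1..n}) : Prop :=
  [/\ is_total_order le,
      (forall a b c : 'X_{1..n}, le a b -> le (a + c)%MM (b + c)%MM)
    & (forall a : 'X_{1..n}, le 0%MM a)].

(* term order on module monomials x^a e_i of R^m *)
Definition is_module_term_order (n m : nat) (le : rel ('X_{1..n} * 'I_m)) : Prop :=
  [/\ is_total_order le,
      (forall (a b c : 'X_{1..n}) (i j : 'I_m),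
          le (a, i) (b, j) -> le ((a + c)%MM, i) ((b + c)%MM, j))
    & (forall (a c : 'X_{1..n}) (i : 'I_m), le (a, i) ((a + c)%MM, i))].

Definition omax (T : Type) (le : rel T) (s : seq T) : option T :=
  foldr (fun x acc => if acc is Some y then (if le y x then Some x else Some y)
                      else Some x) None s.

Definition ole (T : Type) (le : rel T) (a b : option T) : bool :=
  match a, b with
  | None, _ => true
  | Some _, None => false
  | Some x, Some y => le x y
  end.

Section Labeled.
Variables (k : fieldType) (n m : nat).

Local Notation poly := {mpoly k[n]}.
Definition vec := {ffun 'I_m -> poly}.
Definition lpoly := (poly * vec)%type.

(* leading power product (None stands for lpp(0) = 0) and leading coefficient *)
Definition lpp (le : rel 'X_{1..n}) (f : poly) : option 'X_{1..n} :=
  omax le (msupp f).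
Definition lc (le : rel 'X_{1..n}) (f : poly) : k :=
  if lpp le f is Some t then f@_t else 0.

Definition vsupp (u : vec) : seq ('X_{1..n} * 'I_m) :=
  [seq (a, i) | i <- enum 'I_m, a <- msupp (u i)].
Definition vlpp (mle : rel ('X_{1..n} * 'I_m)) (u : vec) :=
  omax mle (vsupp u).

Definition dotv (u : vec) (F : 'I_m -> poly) : poly := \sum_(i < m) u i * F i.
Definition pscale (p : poly) (u : vec) : vec := [ffun i => p * u i].
Definition unitv (i : 'I_m) : vec := [ffun j => (i == j)%:R].

Definition in_ideal (F : 'I_m -> poly) (x : lpoly) : Prop := x.1 = dotv x.2 F.

Definition lmul (p : poly) (x : lpoly) : lpoly := (p * x.1, pscale p x.2).
Definition lscale (c : k) (x : lpoly) : lpoly := (c *: x.1, [ffun i => c *: x.2 i]).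
Definition lsub (x y : lpoly) : lpoly := (x.1 - y.1, [ffun i => x.2 i - y.2 i]).

Definition spoly (le : rel 'X_{1..n}) (tg th : 'X_{1..n}) (x y : lpoly) : lpoly :=
  lsub (lmul 'X_[tg] x) (lscale (lc le x.1 / lc le y.1) (lmul 'X_[th] y)).

Definition critical_pair (le : rel 'X_{1..n}) (mle : rel ('X_{1..n} * 'I_m))
    (tg : 'X_{1..n}) (x : lpoly) (th : 'X_{1..n}) (y : lpoly) : Prop :=
  exists ag ah, [/\ lpp le x.1 = Some ag, lpp le y.1 = Some ah,
    tg = (mlcm ag ah - ag)%MM, th = (mlcm ag ah - ah)%MM &
    ole mle (vlpp mle (pscale 'X_[th] y.2)) (vlpp mle (pscale 'X_[tg] x.2))].

Definition std_rep (le : rel 'X_{1..n}) (mle : rel ('X_{1..n} * 'I_m))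
    (B : seq lpoly) (x : lpoly) : Prop :=
  exists r : seq (poly * lpoly),
    [/\ (forall pr, pr \in r -> pr.2 \in B),
        x.1 = \sum_(pr <- r) pr.1 * pr.2.1
      & (forall pr, pr \in r ->
           ole le (lpp le (pr.1 * pr.2.1)) (lpp le x.1) /\
           ole mle (vlpp mle (pscale pr.1 pr.2.2)) (vlpp mle x.2))].

Definition labeled_GB (le : rel 'X_{1..n}) (mle : rel ('X_{1..n} * 'I_m))
    (F : 'I_m -> poly) (G : seq lpoly) : Prop :=
  forall x : lpoly, in_ideal F x -> x.1 != 0 ->
    exists2 y, y \in G &
      exists tf tg, [/\ lpp le x.1 = Some tf, lpp le y.1 = Some tg,
        (tg <= tf)%MM &
        ole mle (vlpp mle (pscale 'X_[(tf - tg)%MM] y.2)) (vlpp mle x.2)].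

End Labeled.

(* Main.v *)
Require Import Defs.
From HB Require Import structures.
From mathcomp Require Import all_boot all_order all_algebra.
From mathcomp Require Import mpoly.
From mathcomp Require Import zify.
From Stdlib Require Import Classical.
Set Implicit Arguments. Unset Strict Implicit. Unset Printing Implicit Defensive.
Import GRing.Theory.

Section OMax.
Variables (T : eqType) (R : rel T).
Hypothesis HR : is_total_order R.

Lemma tot_refl x : R x x. Proof. by case: HR => r _ _ _; apply: r. Qed.
Lemma tot_trans x y z : R x y -> R y z -> R x z.
Proof. by case: HR => _ _ t _ h1 h2; apply: t h1 h2. Qed.
Lemma tot_anti x y : R x y -> R y x -> x = y.
Proof. by case: HR => _ a _ _ h1 h2; apply: a; rewrite h1 h2. Qed.
Lemma tot_tot x y : R x y || R y x. Proof. by case: HR => _ _ _ t; apply: t. Qed.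

Lemma omax_spec s : (s = [::] /\ omax R s = None) \/
  exists x, [/\ omax R s = Some x, x \in s & forall y, y \in s -> R y x].
Proof.
elim: s => [|x s IH]; first by left.
right; rewrite /=; case: IH => [[-> ->]|[y [-> ys yM]]].
  by exists x; split; rewrite ?mem_seq1 // => z; rewrite mem_seq1 => /eqP ->; apply: tot_refl.
case: ifP => Hyx.
  exists x; split; rewrite ?inE ?eqxx // => z; rewrite inE => /orP[/eqP ->|zs].
    exact: tot_refl.
  exact: tot_trans (yM _ zs) Hyx.
exists y; split; rewrite ?inE ?ys ?orbT // => z; rewrite inE => /orP[/eqP ->|zs]; last exact: yM.
by case/orP: (tot_tot y x) => h; rewrite ?h in Hyx.
Qed.

Lemma omax_uniq s x : x \in s -> (forall y, y \in s -> R y x) -> omax R s = Some x.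
Proof.
move=> xs xM; case: (omax_spec s) => [[E _]|[z [-> zs zM]]]; first by rewrite E in xs.
by rewrite (tot_anti (xM _ zs) (zM _ xs)).
Qed.

Lemma omax_eq_mem s1 s2 : s1 =i s2 -> omax R s1 = omax R s2.
Proof.
move=> E; case: (omax_spec s1) => [[E1 ->]|[x [-> xs xM]]].
  case: (omax_spec s2) => [[_ ->]//|[x [_ xs _]]].
  by rewrite -E E1 in xs.
by symmetry; apply: omax_uniq; rewrite -?E // => y; rewrite -E; apply: xM.
Qed.

Lemma omax_ub s x : x \in s -> ole R (Some x) (omax R s).
Proof.
move=> xs; case: (omax_spec s) => [[E _]|[z [-> _ zM]]]; first by rewrite E in xs.
exact: zM.
Qed.

Lemma omax_lub s o : (forall x, x \in s -> ole R (Some x) o) -> ole R (omax R s) o.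
Proof.
move=> H; case: (omax_spec s) => [[_ ->]//|[z [-> zs _]]]; exact: H.
Qed.

Lemma omax_in s x : omax R s = Some x -> x \in s.
Proof. by case: (omax_spec s) => [[_ ->]//|[z [-> zs _]] [<-]]. Qed.

Lemma omax_None s : omax R s = None -> s = [::].
Proof. by case: (omax_spec s) => [[->]//|[z [-> _ _]]]. Qed.

Lemma ole_trans a b c : ole R a b -> ole R b c -> ole R a c.
Proof. by case: a; case: b; case: c => //= x y z; apply: tot_trans. Qed.

Lemma ole_tot a b : ole R a b || ole R b a.
Proof. by case: a; case: b => //= x y; apply: tot_tot. Qed.

Lemma ole_anti a b : ole R a b -> ole R b a -> a = b.
Proof. by case: a; case: b => //= x y h1 h2; rewrite (tot_anti h1 h2). Qed.

Lemma ole_refl a : ole R a a.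
Proof. by case: a => //= x; apply: tot_refl. Qed.

End OMax.

Lemma omax_map (T U : Type) (R : rel T) (R' : rel U) (f : T -> U) s :
  (forall x y, R' (f x) (f y) = R x y) -> omax R' (map f s) = omap f (omax R s).
Proof.
move=> Hf; elim: s => [|x s IH] //=; rewrite IH.
by case: (omax R s) => //= y; rewrite Hf; case: ifP.
Qed.

Lemma dickson (T : eqType) (c : T -> nat -> nat) (d : nat) (P : T -> Prop) :
  exists B : seq T, (forall b, b \in B -> P b) /\
    forall x, P x -> exists2 b, b \in B & forall i, i < d -> c b i <= c x i.
Proof.
elim: d P => [|d IH] P.
  case: (classic (exists x, P x)) => [[x Px]|NP].
    exists [:: x]; split; first by move=> b; rewrite mem_seq1 => /eqP ->.
    by move=> y _; exists x; rewrite ?mem_seq1.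
  exists [::]; split=> // x Px; case: NP; by exists x.
have [B0 [B0P B0c]] := IH P.
pose N := \max_(b <- B0) c b d.
have Cl : forall N', exists B : seq T, (forall b, b \in B -> P b) /\
    forall x, P x -> c x d < N' -> exists2 b, b \in B & forall i, i < d.+1 -> c b i <= c x i.
  elim=> [|N' IHN]; first by exists [::]; split.
  have [B1 [B1P B1c]] := IHN.
  have [B2 [B2P B2c]] := IH (fun x => P x /\ c x d = N').
  exists (B1 ++ B2); split.
    by move=> b; rewrite mem_cat => /orP[/B1P|/B2P[]].
  move=> x Px; rewrite ltnS leq_eqVlt => /orP[/eqP E|lt].
    have [b bB bc] := B2c x (conj Px E).
    exists b; first by rewrite mem_cat bB orbT.
    move=> i; rewrite ltnS leq_eqVlt => /orP[/eqP ->|/bc //].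
    by have [_ ->] := B2P b bB; rewrite E.
  have [b bB bc] := B1c x Px lt; exists b => //; by rewrite mem_cat bB.
have [B1 [B1P B1c]] := Cl N.
exists (B0 ++ B1); split; first by move=> b; rewrite mem_cat => /orP[/B0P|/B1P].
move=> x Px; case: (ltnP (c x d) N) => h.
  have [b bB bc] := B1c x Px h; exists b => //; by rewrite mem_cat bB orbT.
have [b bB bc] := B0c x Px; exists b; first by rewrite mem_cat bB.
move=> i; rewrite ltnS leq_eqVlt => /orP[/eqP ->|/bc //].
apply: leq_trans h; exact: leq_bigmax_seq.
Qed.

Section WF.
Variable n : nat.
Variable le : rel 'X_{1..n}.
Hypothesis Hle : is_term_order le.

Lemma le_tot : is_total_order le. Proof. by case: Hle. Qed.

Lemma le_divides a b : (a <= b)%MM -> le a b.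
Proof.
move=> ab; case: Hle => _ Hc H0.
by have := Hc _ _ a (H0 (b - a)%MM); rewrite add0m submK.
Qed.

Definition ltT (x y : 'X_{1..n}) := le x y && (x != y).

Lemma ltT_wf : well_founded ltT.
Proof.
move=> x; apply: NNPP => nAx.
have [B [BP Bc]] := dickson (fun (m : 'X_{1..n}) i => nth 0%N m i) n (fun y => ~ Acc ltT y).
have TR : is_total_order (fun x y : 'X_{1..n} => le y x).
  have TT := le_tot; split.
  - by move=> z; apply: (tot_refl TT).
  - by move=> z w /andP[h1 h2]; apply: (tot_anti TT).
  - by move=> z w v h1 h2; apply: (tot_trans TT) h2 h1.
  - by move=> z w; rewrite orbC; apply: (tot_tot TT).
case: (omax_spec TR B) => [[E _]|[b0 [_ b0B b0M]]].
  by have [b] := Bc x nAx; rewrite E.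
apply: (BP b0 b0B); constructor => y /andP[yb0 ny].
apply: NNPP => nAy; have [b bB bc] := Bc y nAy.
have by_ : le b y.
  apply: le_divides; apply/mnm_lepP => i.
  by rewrite !(mnm_nth 0%N); apply: bc.
have := tot_anti le_tot yb0 (tot_trans le_tot (b0M _ bB) by_).
by move=> E; rewrite E eqxx in ny.
Qed.
End WF.
Section Poly.
Variables (k : fieldType) (n : nat).
Local Notation poly := {mpoly k[n]}.
Local Open Scope ring_scope.

Definition good (R : rel 'X_{1..n}) :=
  is_total_order R /\ forall c x y, R (c + x)%MM (c + y)%MM = R x y.

Lemma good_of (R : rel 'X_{1..n}) : is_total_order R ->
  (forall c x y, R x y -> R (x + c)%MM (y + c)%MM) -> good R.
Proof.
move=> TR Hc; split=> // c x y; apply/idP/idP => h; last by rewrite ![(c + _)%MM]addmC; apply: Hc.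
case/orP: (tot_tot TR x y) => // yx.
have := Hc c _ _ yx; rewrite ![(_ + c)%MM]addmC => h2.
by have /addmI -> := tot_anti TR h h2; apply: tot_refl.
Qed.

Lemma mem_msuppXM (c : 'X_{1..n}) (p : poly) a :
  (a \in msupp ('X_[c] * p)) = (a \in [seq (c + m')%MM | m' <- msupp p]).
Proof. by rewrite mulrC (perm_mem (msuppMX p c)). Qed.

Lemma lppXM R (HR : good R) (c : 'X_{1..n}) (p : poly) :
  lpp R ('X_[c] * p) = omap (fun a => (c + a)%MM) (lpp R p).
Proof.
rewrite /lpp (omax_eq_mem HR.1 (mem_msuppXM c p)).
by apply: omax_map => x y; apply: HR.2.
Qed.

Lemma lppZ R (HR : good R) (c : k) (p : poly) : c != 0 -> lpp R (c *: p) = lpp R p.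
Proof. by move=> nz; rewrite /lpp; apply: (omax_eq_mem HR.1); apply: perm_mem; apply: msuppZ. Qed.

Lemma lppZ_le R (HR : good R) (c : k) (p : poly) : ole R (lpp R (c *: p)) (lpp R p).
Proof.
have [->|nz] := eqVneq c 0; first by rewrite scale0r /lpp msupp0.
by rewrite lppZ //; apply: (ole_refl HR.1).
Qed.

Lemma lpp_eq0 R (HR : good R) (p : poly) : (lpp R p == None) = (p == 0).
Proof.
apply/eqP/eqP => [/(omax_None HR.1)/msuppnil0 //|->]; by rewrite /lpp msupp0.
Qed.

Lemma lpp_in R (HR : good R) (p : poly) a : lpp R p = Some a -> a \in msupp p.
Proof. by move=> E; apply: (omax_in HR.1 E). Qed.

Lemma lpp_ub R (HR : good R) (p : poly) a : a \in msupp p -> ole R (Some a) (lpp R p).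
Proof. by move=> E; apply: (omax_ub HR.1 E). Qed.

Lemma lpp_max R (HR : good R) (p : poly) a : lpp R p = Some a ->
  forall b, b \in msupp p -> R b a.
Proof. by move=> E b /(lpp_ub HR); rewrite E. Qed.

Lemma prod_lead R (HR : good R) (p h : poly) a b :
  a \in msupp p -> b \in msupp h -> (forall y, y \in msupp h -> R y b) ->
  exists a', [/\ a' \in msupp p, R a a' & (a' + b)%MM \in msupp (p * h)].
Proof.
move=> ap bh bM; have TR := HR.1.
case: (omax_spec TR (msupp p)) => [[E _]|[a' [_ a'p a'M]]]; first by rewrite E in ap.
exists a'; split => //; first exact: a'M.
rewrite mcoeff_msupp mpolyME raddf_sum /=.
under eq_bigr do rewrite mcoeffZ mcoeffX.
have zin : (a', b) \in [seq (x, y) | x <- msupp p, y <- msupp h].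
  by apply/allpairsP; exists (a', b).
rewrite (bigD1_seq (a', b)) //=; last first.
  by apply: allpairs_uniq; rewrite ?msupp_uniq // => -[x1 y1] [x2 y2] _ _ /= [-> ->].
rewrite eqxx mulr1 big1_seq ?addr0; first by rewrite mulf_neq0 // -mcoeff_msupp.
move=> [x y] /andP[nz H]; move: nz; case/allpairsP: H => [[x' y'] [xp yh /= [-> ->]]] nz /=.
case: eqP => [E|]; last by rewrite mulr0.
have h1 : R (x' + y')%MM (x' + b)%MM by rewrite HR.2; apply: bM.
have h2 : R (x' + b)%MM (a' + b)%MM by rewrite ![(_ + b)%MM]addmC HR.2; apply: a'M.
rewrite E in h1; have E2 := tot_anti TR h1 h2.
have E3 : x' = a' by apply: (addIm (esym E2)).
subst x'; move/addmI: E => Ey; subst y'.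
by rewrite eqxx in nz.
Qed.

End Poly.
Section Module.
Variables (k : fieldType) (n m : nat).
Local Notation poly := {mpoly k[n]}.
Local Notation vec := (vec k n m).
Local Open Scope ring_scope.
Variable mle : rel ('X_{1..n} * 'I_m).
Hypothesis Hmle : is_module_term_order mle.

Lemma mtot : is_total_order mle. Proof. by case: Hmle. Qed.

Lemma mem_vsupp (u : vec) a i : ((a, i) \in vsupp u) = (a \in msupp (u i)).
Proof.
apply/idP/idP.
  by case/allpairsPdep => j [b [_ bu [-> ->]]].
by move=> h; apply/allpairsPdep; exists i, a; rewrite mem_enum.
Qed.

Lemma goodi (i : 'I_m) : good (fun x y : 'X_{1..n} => mle (x, i) (y, i)).
Proof.
have TT := mtot.
apply: good_of; last by case: Hmle => _ Hc _ c x y; apply: Hc.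
split.
- by move=> x; apply: (tot_refl TT).
- by move=> x y /andP[h1 h2]; case: (tot_anti TT h1 h2).
- by move=> x y z; apply: (tot_trans TT).
- by move=> x y; apply: (tot_tot TT).
Qed.

Definition shiftm (c : 'X_{1..n}) (z : 'X_{1..n} * 'I_m) := ((c + z.1)%MM, z.2).

Lemma mle_shift c z w : mle (shiftm c z) (shiftm c w) = mle z w.
Proof.
have TT := mtot; case: Hmle => _ Hc _.
case: z w => [a i] [b j]; rewrite /shiftm /=; apply/idP/idP => h; last first.
  by rewrite ![(c + _)%MM]addmC; apply: Hc.
case/orP: (tot_tot TT (a, i) (b, j)) => // h2.
have := Hc _ _ c _ _ h2; rewrite ![(_ + c)%MM]addmC => h3.
have E := tot_anti TT h h3.
have E1 : (c + a)%MM = (c + b)%MM by exact: (congr1 fst E).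
have E2 : i = j by exact: (congr1 snd E).
have E3 := addmI E1; subst; exact: (tot_refl TT).
Qed.

Lemma vlppXM (c : 'X_{1..n}) (v : vec) :
  vlpp mle (pscale 'X_[c] v) = omap (shiftm c) (vlpp mle v).
Proof.
rewrite /vlpp -(omax_map _ (mle_shift c)); apply: (omax_eq_mem mtot) => -[a i].
rewrite mem_vsupp ffunE mem_msuppXM; apply/mapP/mapP.
  by case=> b bv ->; exists (b, i); rewrite ?mem_vsupp.
by case=> -[b j]; rewrite mem_vsupp /shiftm /= => bv [-> ->]; exists b.
Qed.

Lemma vprod_lead (p : poly) (v : vec) a b i :
  a \in msupp p -> vlpp mle v = Some (b, i) ->
  ole mle (Some ((a + b)%MM, i)) (vlpp mle (pscale p v)).
Proof.
move=> ap E.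
have bv : b \in msupp (v i) by rewrite -mem_vsupp; apply: (omax_in mtot E).
have bM : forall y, y \in msupp (v i) -> mle (y, i) (b, i).
  by move=> y; rewrite -mem_vsupp => /(omax_ub mtot); rewrite /vlpp in E; rewrite E.
have [a' [a'p aa' a'in]] := prod_lead (goodi i) ap bv bM.
apply: (ole_trans mtot (b := Some ((a' + b)%MM, i))).
  by rewrite /= ![(_ + b)%MM]addmC (goodi i).2.
by apply: (omax_ub mtot); rewrite mem_vsupp ffunE.
Qed.

Lemma vlpp_sub (w A B : vec) :
  (forall i, {subset msupp (w i) <= msupp (A i) ++ msupp (B i)}) ->
  ole mle (vlpp mle B) (vlpp mle A) -> ole mle (vlpp mle w) (vlpp mle A).
Proof.
move=> Hs BA; apply: (omax_lub mtot) => -[a i]; rewrite mem_vsupp => /Hs.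
rewrite mem_cat -!mem_vsupp => /orP[] h; first exact: (omax_ub mtot).
exact: (ole_trans mtot (omax_ub mtot h) BA).
Qed.

End Module.
From mathcomp Require Import ring.
Section Main.
Variables (k : fieldType) (n m : nat).
Variables (le : rel 'X_{1..n}) (mle : rel ('X_{1..n} * 'I_m)).
Hypotheses (Hle : is_term_order le) (Hmle : is_module_term_order mle).
Variables (F : 'I_m -> {mpoly k[n]}) (G : seq (lpoly k n m)).
Hypothesis HG : forall x, x \in G -> in_ideal F x.
Hypothesis HF : forall i : 'I_m, (F i, unitv k n i) \in G.
Hypothesis Hcp : forall x y tg th, x \in G -> y \in G -> critical_pair le mle tg x th y ->
     std_rep le mle G (spoly le tg th x y).
Local Notation poly := {mpoly k[n]}.
Local Notation lp := (lpoly k n m).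
Local Open Scope ring_scope.

Lemma HL : good le.
Proof. apply: good_of; first exact: le_tot. by case: Hle => _ Hc _ c x y; apply: Hc. Qed.
Let LT := le_tot Hle.
Let MT := mtot Hmle.

Lemma cXM (c : 'X_{1..n}) (p : poly) a : ('X_[c] * p)@_(c + a) = p@_a.
Proof. by rewrite mulrC mcoeffMX. Qed.

Lemma lt_chain (s x M L : 'X_{1..n}) : le x M -> le M L -> M != L ->
  le (s + x)%MM (s + L)%MM && ((s + x)%MM != (s + L)%MM).
Proof.
move=> xM ML nML; have xL := tot_trans LT xM ML.
rewrite HL.2 xL /=; apply/negP => /eqP /addmI E; subst x.
by rewrite (tot_anti LT ML xM) eqxx in nML.
Qed.

Lemma ole_lt (o : option 'X_{1..n}) y T : ole le o (Some y) -> le y T -> y != T ->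
  ole le o (Some T) && (o != Some T).
Proof.
case: o => //= z zy yT nyT; rewrite (tot_trans LT zy yT) /=.
apply/negP => /eqP [E]; subst z.
by rewrite (tot_anti LT yT zy) eqxx in nyT.
Qed.


Lemma ole_shift s (o1 o2 : option ('X_{1..n} * 'I_m)) :
  ole mle o1 o2 -> ole mle (omap (shiftm s) o1) (omap (shiftm s) o2).
Proof. by case: o1; case: o2 => //= z w; rewrite (mle_shift Hmle). Qed.

Definition val (e : k * 'X_{1..n} * lp) : poly := e.1.1 *: ('X_[e.1.2] * e.2.1).

Lemma lppS (g h : lp) a b : lpp le g.1 = Some a -> lpp le h.1 = Some b ->
  ole le (lpp le (spoly le (mlcm a b - a) (mlcm a b - b) g h).1) (Some (mlcm a b)) &&
  (lpp le (spoly le (mlcm a b - a) (mlcm a b - b) g h).1 != Some (mlcm a b)).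
Proof.
move=> Ea Eb; set L := mlcm a b.
have E1 : ((L - a) + a)%MM = L by rewrite submK // lem_mlcml.
have E2 : ((L - b) + b)%MM = L by rewrite submK // lem_mlcmr.
rewrite /spoly /lsub /lmul /lscale /=; apply/andP; split.
  apply: (omax_lub LT) => z /msuppB_le; rewrite mem_cat => /orP[|/msuppZ_le].
    rewrite mem_msuppXM => /mapP [a'' a''g ->] /=.
    by rewrite -{2}E1 HL.2; apply: (lpp_max HL Ea).
  rewrite mem_msuppXM => /mapP [b'' b''h ->] /=.
  by rewrite -{2}E2 HL.2; apply: (lpp_max HL Eb).
apply/negP => /eqP /(lpp_in HL); rewrite mcoeff_msupp mcoeffB mcoeffZ.
have -> : ('X_[L - a] * g.1)@_L = g.1@_a by have := cXM (L - a) g.1 a; rewrite E1.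
have -> : ('X_[L - b] * h.1)@_L = h.1@_b by have := cXM (L - b) h.1 b; rewrite E2.
have hb : h.1@_b != 0 by rewrite -mcoeff_msupp; apply: (lpp_in HL Eb).
by rewrite /lc Ea Eb divfK // subrr eqxx.
Qed.

Lemma combineB (g h : lp) a b s (c1 c2 : k) :
  g \in G -> h \in G -> lpp le g.1 = Some a -> lpp le h.1 = Some b ->
  ole mle (vlpp mle (pscale 'X_[(mlcm a b - b)%MM] h.2))
          (vlpp mle (pscale 'X_[(mlcm a b - a)%MM] g.2)) ->
  exists news : seq (k * 'X_{1..n} * lp),
  [/\ c1 *: ('X_[(s + (mlcm a b - a))%MM] * g.1) + c2 *: ('X_[(s + (mlcm a b - b))%MM] * h.1) =
      \sum_(e <- news) val e +
      (c2 + c1 * (lc le g.1 / lc le h.1)) *: ('X_[(s + (mlcm a b - b))%MM] * h.1),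
   forall e, e \in news -> e.2 \in G,
   forall e, e \in news -> ole le (lpp le (val e)) (Some (s + mlcm a b)%MM) &&
                           (lpp le (val e) != Some (s + mlcm a b)%MM) &
   forall e, e \in news -> ole mle (vlpp mle (pscale 'X_[e.1.2] e.2.2))
                                    (vlpp mle (pscale 'X_[(s + (mlcm a b - a))%MM] g.2))].
Proof.
move=> gG hG Ea Eb Hor.
set L := mlcm a b; set tg := (L - a)%MM; set th := (L - b)%MM.
have cp : critical_pair le mle tg g th h by exists a, b.
have [rr [rrG rrS rrB]] := Hcp gG hG cp.
set S := spoly le tg th g h in rrS rrB.
exists (flatten [seq [seq ((c1 * pr.1@_a', (s + a')%MM), pr.2) | a' <- msupp pr.1] | pr <- rr]).
split.
- have -> : \sum_(e <- flatten [seq [seq ((c1 * pr.1@_a', (s + a')%MM), pr.2) | a' <- msupp pr.1] | pr <- rr]) val e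
      = c1 *: ('X_[s] * S.1).
    rewrite big_flatten big_map rrS mulr_sumr scaler_sumr; apply: eq_bigr => pr _.
    rewrite big_map.
    have -> : pr.1 * pr.2.1 = \sum_(a' <- msupp pr.1) (pr.1@_a' *: 'X_[a']) * pr.2.1 by rewrite -mulr_suml -mpolyE.
    rewrite mulr_sumr scaler_sumr; apply: eq_bigr => a' _.
    rewrite /val /= mpolyXD -!mul_mpolyC mpolyCM; ring.
  rewrite /S /spoly /lsub /lmul /lscale /= !mpolyXD -!mul_mpolyC ?mpolyCD ?mpolyCM ?mpolyCB; ring.
- by move=> e /flatten_mapP [pr prr /mapP [a' _ ->]]; apply: rrG.
- move=> e /flatten_mapP [pr prr /mapP [a' a'p ->]]; rewrite /val /=.
  have [Hb1 Hb2] := rrB pr prr.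
  have Z := lppZ_le HL (c1 * pr.1@_a') ('X_[(s + a')%MM] * pr.2.1).
  rewrite (lppXM HL) in Z.
  case E' : (lpp le pr.2.1) => [b'|]; rewrite E' /= in Z; last first.
    by case: (lpp le _) Z.
  have [a'' [a''p aa'' a''in]] := prod_lead HL a'p (lpp_in HL E') (lpp_max HL E').
  have Hc := ole_trans LT (lpp_ub HL a''in) Hb1.
  have := lppS Ea Eb; rewrite -/L -/tg -/th -/S.
  case ES : (lpp le S.1) Hc => [M|] //= Hc /andP[ML nML].
  have h1 : le (a' + b')%MM M.
    apply: (tot_trans LT (y := (a'' + b')%MM)) => //.
    by rewrite ![(_ + b')%MM]addmC HL.2.
  have nML' : M != L by apply: contra nML => /eqP ->.
  have /andP[h2 h3] := lt_chain s h1 ML nML'.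
  by apply: ole_lt h2 h3; rewrite addmA.
- move=> e /flatten_mapP [pr prr /mapP [a' a'p ->]] /=.
  have [Hb1 Hb2] := rrB pr prr.
  rewrite !(vlppXM Hmle).
  case E'' : (vlpp mle pr.2.2) => [[b' i]|] //=.
  have -> : shiftm (s + a') (b', i) = shiftm s ((a' + b')%MM, i) by rewrite /shiftm /= addmA.
  have -> : omap (shiftm (s + tg)) (vlpp mle g.2) = omap (shiftm s) (omap (shiftm tg) (vlpp mle g.2)).
    by case: (vlpp mle g.2) => // -[z j]; rewrite /shiftm /= addmA.
  rewrite -(vlppXM Hmle); apply: (@ole_shift s (Some ((a' + b')%MM, i))).
  apply: (ole_trans MT (vprod_lead Hmle a'p E'')).
  apply: (ole_trans MT Hb2).
  apply: (vlpp_sub Hmle) Hor => i0.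
  rewrite /S /spoly /lsub /lmul /lscale /= !ffunE => z /msuppB_le.
  by rewrite !mem_cat => /orP[->//|] /msuppZ_le ->; rewrite orbT.
Qed.

Lemma decomp e T : lpp le (val e) = Some T ->
  exists a, [/\ e.1.1 != 0, lpp le e.2.1 = Some a & T = (e.1.2 + a)%MM].
Proof.
rewrite /val; have [->|nz] := eqVneq e.1.1 0; first by rewrite scale0r /lpp msupp0.
rewrite (lppZ HL) // (lppXM HL).
by case: (lpp le e.2.1) => //= a [<-]; exists a.
Qed.

Lemma combineA e1 e2 T : e1.2 \in G -> e2.2 \in G ->
  lpp le (val e1) = Some T -> lpp le (val e2) = Some T ->
  exists news, exists e',
  [/\ val e1 + val e2 = \sum_(e <- news) val e + val e',
      (e'.2 = e1.2 /\ e'.1.2 = e1.1.2) \/ (e'.2 = e2.2 /\ e'.1.2 = e2.1.2),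
      forall e, e \in news -> e.2 \in G,
      forall e, e \in news -> ole le (lpp le (val e)) (Some T) && (lpp le (val e) != Some T) &
      forall e, e \in news -> forall U,
        ole mle (vlpp mle (pscale 'X_[e1.1.2] e1.2.2)) U ->
        ole mle (vlpp mle (pscale 'X_[e2.1.2] e2.2.2)) U ->
        ole mle (vlpp mle (pscale 'X_[e.1.2] e.2.2)) U].
Proof.
move=> gG hG E1 E2.
have [a [_ Ea HTa]] := decomp E1; have [b [_ Eb HTb]] := decomp E2.
move: e1 e2 gG hG E1 E2 HTa HTb Ea Eb => [[c1 t1] g] [[c2 t2] h] /= gG hG E1 E2 HTa HTb Ea Eb.
set L := mlcm a b; set s := (T - L)%MM.
have pw : forall i, T i = (t1 i + a i)%N /\ T i = (t2 i + b i)%N.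
  by move=> i; split; [rewrite HTa | rewrite HTb]; rewrite mnmDE.
have Lw : forall i, L i = maxn (a i) (b i) by move=> i; rewrite /L /mlcm mnmE.
have Ht1 : t1 = (s + (L - a))%MM.
  by apply/mnmP => i; rewrite !mnmDE !mnmBE Lw; have [] := pw i; lia.
have Ht2 : t2 = (s + (L - b))%MM.
  by apply/mnmP => i; rewrite !mnmDE !mnmBE Lw; have [] := pw i; lia.
have HT : T = (s + L)%MM.
  by apply/mnmP => i; rewrite !mnmDE !mnmBE Lw; have [] := pw i; lia.
case/orP: (ole_tot MT (vlpp mle (pscale 'X_[(L - b)%MM] h.2))
                      (vlpp mle (pscale 'X_[(L - a)%MM] g.2))) => Hor.
  have [news [Hs HG' Hl Hm]] := combineB s c1 c2 gG hG Ea Eb Hor.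
  exists news, ((c2 + c1 * (lc le g.1 / lc le h.1), t2), h); split => //.
  - by rewrite /val /= Ht1 Ht2; exact: Hs.
  - by right.
  - by rewrite HT; exact: Hl.
  - by move=> e en U H1 H2; apply: (ole_trans MT (Hm e en)); rewrite -Ht1.
have Hor' : ole mle (vlpp mle (pscale 'X_[(mlcm b a - a)%MM] g.2))
                    (vlpp mle (pscale 'X_[(mlcm b a - b)%MM] h.2)) by rewrite mlcmC.
have [news [Hs HG' Hl Hm]] := combineB s c2 c1 hG gG Eb Ea Hor'.
rewrite mlcmC -/L in Hs Hl Hm.
exists news, ((c1 + c2 * (lc le h.1 / lc le g.1), t1), g); split => //.
- by rewrite /val /= addrC Ht1 Ht2; exact: Hs.
- by left.
- by rewrite HT; exact: Hl.
- by move=> e en U H1 H2; apply: (ole_trans MT (Hm e en)); rewrite -Ht2.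
Qed.

Definition valid (x : lp) (r : seq (k * 'X_{1..n} * lp)) :=
  [/\ (forall e, e \in r -> e.2 \in G), x.1 = \sum_(e <- r) val e &
      forall e, e \in r -> ole mle (vlpp mle (pscale 'X_[e.1.2] e.2.2)) (vlpp mle x.2)].

Definition goalP (x : lp) :=
  exists2 y, y \in G &
      exists tf tg, [/\ lpp le x.1 = Some tf, lpp le y.1 = Some tg,
        (tg <= tf)%MM &
        ole mle (vlpp mle (pscale 'X_[(tf - tg)%MM] y.2)) (vlpp mle x.2)].

Lemma bound_spec (r : seq (k * 'X_{1..n} * lp)) :
  (forall e, e \in r -> lpp le (val e) = None) \/
  exists T', (exists2 e, e \in r & lpp le (val e) = Some T') /\
             forall e, e \in r -> ole le (lpp le (val e)) (Some T').
Proof.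
case: (omax_spec LT (pmap (fun e => lpp le (val e)) r)) => [[E _]|[T' [_ Tin TM]]].
  left => e er; case E' : (lpp le (val e)) => [z|] //.
  have : z \in pmap (fun e => lpp le (val e)) r by rewrite mem_pmap; apply/mapP; exists e.
  by rewrite E.
right; exists T'; split.
  by move: Tin; rewrite mem_pmap => /mapP [e er E]; exists e.
move=> e er; case E' : (lpp le (val e)) => [z|] //=; apply: TM.
by rewrite mem_pmap; apply/mapP; exists e.
Qed.

Lemma lpp_val_le (e e' : k * 'X_{1..n} * lp) : e'.2 = e.2 -> e'.1.2 = e.1.2 -> e.1.1 != 0 ->
  ole le (lpp le (val e')) (lpp le (val e)).
Proof. by move=> E2 E12 nz; rewrite /val E2 E12 (lppZ HL _ nz); apply: (lppZ_le HL). Qed.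

Lemma main_ind (x : lp) : x.1 != 0 -> forall T r, valid x r ->
  (forall e, e \in r -> ole le (lpp le (val e)) (Some T)) -> goalP x.
Proof.
move=> nz T; induction T as [T IHT] using (well_founded_ind (ltT_wf Hle)).
move=> r; move Hc: (count (fun e => lpp le (val e) == Some T) r) => N.
elim/ltn_ind: N r Hc => N IHN r Hc [HvG HvS HvM] Hb.
set top := (fun e => lpp le (val e) == Some T) in Hc.
case: N IHN Hc => [|[|N]] IHN Hc.
-
  have nt : forall e, e \in r -> lpp le (val e) != Some T.
    by move: Hc => /eqP; rewrite -leqn0 leqNgt -has_count => /hasPn.
  case: (bound_spec r) => [Hn|[T' [[e0 e0r E0] HbT']]].
    case/eqP: nz; rewrite HvS big1_seq // => e /andP[_ er].
    by apply/eqP; rewrite -(lpp_eq0 HL); apply/eqP; apply: Hn.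
  have Hlt : ltT le T' T.
    rewrite /ltT; have := Hb e0 e0r; rewrite E0 /= => ->.
    by have := nt e0 e0r; rewrite E0; apply: contra => /eqP ->.
  exact: (IHT T' Hlt r (And3 HvG HvS HvM) HbT').
-
  have : has top r by rewrite has_count Hc.
  case/hasP => e1 e1r /eqP top1.
  have Hrest : count top (rem e1 r) = 0%N.
    have := (permP (perm_to_rem e1r)) top; rewrite Hc /= /top top1 eqxx /=.
    by case=> ->.
  have nt : forall e, e \in rem e1 r -> lpp le (val e) != Some T.
    by move: Hrest => /eqP; rewrite -leqn0 leqNgt -has_count => /hasPn.
  have LX : lpp le x.1 = Some T.
    apply: (omax_uniq LT).
      rewrite mcoeff_msupp HvS raddf_sum (perm_big _ (perm_to_rem e1r)) big_cons /=.
      rewrite big1_seq ?addr0; first by rewrite -mcoeff_msupp; apply: (lpp_in HL top1).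
      move=> e /andP[_ er]; apply: memN_msupp_eq0; apply/negP => Tin.
      have h1 := lpp_ub HL Tin; have h2 := Hb e (mem_rem er).
      by have := ole_anti LT h1 h2; move: (nt e er) => /eqP ne E; apply: ne; rewrite -E.
    move=> z; rewrite HvS => /msupp_sum_le /flatten_mapP [e].
    rewrite mem_filter /= => er zin.
    exact: (ole_trans LT (lpp_ub HL zin) (Hb e er)).
  have [a [nz1 Ea HT]] := decomp top1.
  exists e1.2; first exact: HvG.
  exists T, a; split => //; first by rewrite HT lem_addl.
  by rewrite HT addmK; apply: HvM.
-
  have : has top r by rewrite has_count Hc.
  case/hasP => e1 e1r /eqP top1.
  have Hc1 : count top (rem e1 r) = N.+1.
    have := (permP (perm_to_rem e1r)) top; rewrite Hc /= /top top1 eqxx /=.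
    by case=> ->.
  have : has top (rem e1 r) by rewrite has_count Hc1.
  case/hasP => e2 e2r /eqP top2.
  have e2r' := mem_rem e2r.
  have [news [e' [Hs He' HnG HnL HnM]]] := combineA (HvG _ e1r) (HvG _ e2r') top1 top2.
  set rest := rem e2 (rem e1 r).
  have Hc2 : count top rest = N.
    have := (permP (perm_to_rem e2r)) top; rewrite Hc1 /= /top top2 eqxx /=.
    by case=> ->.
  have [a1 [nz1 _ _]] := decomp top1; have [a2 [nz2 _ _]] := decomp top2.
  have He'L : ole le (lpp le (val e')) (Some T).
    case: He' => [[E2 E12]|[E2 E12]].
      by rewrite -top1; apply: lpp_val_le.
    by rewrite -top2; apply: lpp_val_le.
  have restin : forall e, e \in rest -> e \in r by move=> e /mem_rem /mem_rem.
  refine (IHN _ _ (news ++ e' :: rest) erefl _ _).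
  + rewrite count_cat /= Hc2.
    have -> : count top news = 0%N.
      apply/eqP; rewrite -leqn0 leqNgt -has_count; apply/hasPn => e en.
      by have /andP[_ ->] := HnL e en.
    by case: (_ == _).
  + rewrite /valid; split.
    * move=> e; rewrite mem_cat inE => /orP[/HnG //|/orP[/eqP ->|/restin /HvG //]].
      by case: He' => -[-> _]; apply: HvG.
    * rewrite HvS (perm_big _ (perm_to_rem e1r)) big_cons (perm_big _ (perm_to_rem e2r)) big_cons.
      by rewrite big_cat big_cons /= addrA Hs -addrA.
    * move=> e; rewrite mem_cat inE => /orP[en|/orP[/eqP ->|/restin /HvM //]].
        by apply: HnM => //; apply: HvM.
      by case: He' => -[-> ->]; apply: HvM.
  + move=> e; rewrite mem_cat inE => /orP[/HnL /andP[] //|/orP[/eqP -> //|/restin /Hb //]].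
Qed.

Lemma vlpp_unit a i : vlpp mle (pscale 'X_[a] (unitv k n i)) = Some (a, i).
Proof.
rewrite /vlpp (@omax_eq_mem _ _ MT _ [:: (a, i)]) //.
move=> [a' j]; rewrite mem_vsupp !ffunE mem_seq1 xpair_eqE.
have [E|nij] := eqVneq j i; first subst j.
  have ii : (i == i) = true by apply/eqP.
  by rewrite /= mulr1n mulr1 msuppX mem_seq1 andbT.
by rewrite /= mulr0n mulr0 msupp0 in_nil andbF.
Qed.

Theorem main_thm : labeled_GB le mle F G.
Proof.
move=> x Hx nz.
set r0 := flatten [seq [seq (((x.2 i)@_a, a), (F i, unitv k n i)) | a <- msupp (x.2 i)] | i <- enum 'I_m].
have V : valid x r0.
  split.
  - by move=> e /flatten_mapP [i _ /mapP [a _ ->]]; apply: HF.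
  - rewrite Hx /dotv /r0 big_flatten big_map.
    rewrite big_enum /=; apply: eq_big => // i _.
    rewrite big_map; have -> : x.2 i * F i = \sum_(a <- msupp (x.2 i)) ((x.2 i)@_a *: 'X_[a]) * F i.
      by rewrite -mulr_suml -mpolyE.
    by apply: eq_bigr => a _; rewrite /val /= -scalerAl.
  - move=> e /flatten_mapP [i _ /mapP [a ai ->]] /=.
    by rewrite vlpp_unit; apply: (omax_ub MT); rewrite mem_vsupp.
case: (bound_spec r0) => [Hn|[T' [_ HbT']]].
  case/eqP: nz; case: V => _ -> _; rewrite big1_seq // => e /andP[_ er].
  by apply/eqP; rewrite -(lpp_eq0 HL); apply/eqP; apply: Hn.
exact: main_ind nz T' r0 V HbT'.
Qed.
End Main.

Local Open Scope ring_scope.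

Theorem lemma5p2 (k : fieldType) (n m : nat)
    (le : rel 'X_{1..n}) (mle : rel ('X_{1..n} * 'I_m))
    (Hle : is_term_order le) (Hmle : is_module_term_order mle)
    (F : 'I_m -> {mpoly k[n]}) (G : seq (lpoly k n m)) :
  (forall x, x \in G -> in_ideal F x) ->
  (forall i : 'I_m, (F i, unitv k n i) \in G) ->
  (forall x y tg th, x \in G -> y \in G -> critical_pair le mle tg x th y ->
     std_rep le mle G (spoly le tg th x y)) ->
  labeled_GB le mle F G.
Proof.
move=> HG HF Hcp.
exact: (main_thm Hle Hmle HF Hcp).
Qed.
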